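(* Consider a finite discounted MDP with $A$ actions, rewards in $[0,1]$, discount $\gamma\in[0,1)$ and initial distribution $\rho$. For $\tau>0$ let $\tilde V^\pi_\tau(\rho):=V^\pi(\rho)+\tau\mathbb{H}(\pi)$ and $\tilde V^*_\tau(\rho):=\max_\pi\tilde V^\pi_\tau(\rho)$. For a fixed softmax policy $\pi_\theta$ and $0<\tau_2<\tau_1$, $$\tilde V^*_{\tau_2}(\rho)-\tilde V^{\pi_\theta}_{\tau_2}(\rho)\le\tilde V^*_{\tau_1}(\rho)-\tilde V^{\pi_\theta}_{\tau_1}(\rho)+\frac{2\tau_1\log A}{1-\gamma}.$$
   Context: $V^\pi(\rho)=\mathbb{E}_{s_0\sim\rho}\mathbb{E}^\pi[\sum_{t\ge0}\gamma^tr(s_t,a_t)]$ and $\mathbb{H}(\pi):=\mathbb{E}_{s_0\sim\rho,a_t\sim\pi(\cdot|s_t),s_{t+1}\sim\mathcal{P}(\cdot|s_t,a_t)}[\sum_{t\ge0}-\gamma^t\log\pi(a_t\mid s_t)]$ (discounted entropy). *)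

(* Defs.v *)
From mathcomp Require Import all_boot all_order all_algebra.
From mathcomp Require Import all_classical all_reals all_analysis.
Set Implicit Arguments. Unset Strict Implicit. Unset Printing Implicit Defensive.
Import Order.TTheory GRing.Theory Num.Theory.
Local Open Scope ring_scope.
Local Open Scope classical_set_scope.

Section MDP.
Variables (R : realType) (S A : finType).

(* stationary (Markov, stochastic) policy pi s a = pi(a | s) *)
Definition is_policy (pi : S -> A -> R) : Prop :=
  (forall s a, 0 <= pi s a) /\ (forall s, \sum_(a : A) pi s a = 1).

(* transition kernel P s a s' = P(s' | s, a) *)
Definition is_transition (P : S -> A -> S -> R) : Prop :=
  (forall s a s', 0 <= P s a s') /\ (forall s a, \sum_(s' : S) P s a s' = 1).

Definition is_distribution (rho : S -> R) : Prop :=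
  (forall s, 0 <= rho s) /\ \sum_(s : S) rho s = 1.

(* law of s_t under s_0 ~ rho, a_t ~ pi(.|s_t), s_{t+1} ~ P(.|s_t,a_t) *)
Fixpoint state_dist (P : S -> A -> S -> R) (pi : S -> A -> R) (rho : S -> R)
    (t : nat) : S -> R :=
  match t with
  | 0%N => rho
  | t'.+1 => fun s' => \sum_(s : S) \sum_(a : A)
       state_dist P pi rho t' s * pi s a * P s a s'
  end.

(* E[ sum_t gamma^t f(s_t, a_t) ] *)
Definition disc_sum (P : S -> A -> S -> R) (gamma : R) (rho : S -> R)
    (pi : S -> A -> R) (f : S -> A -> R) : R :=
  limn (fun n => \sum_(0 <= t < n) (gamma ^+ t *
     \sum_(s : S) \sum_(a : A) state_dist P pi rho t s * pi s a * f s a)).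

Definition value P (r : S -> A -> R) gamma rho pi : R :=
  disc_sum P gamma rho pi r.

Definition disc_entropy P gamma rho (pi : S -> A -> R) : R :=
  disc_sum P gamma rho pi (fun s a => - ln (pi s a)).

Definition reg_value P r gamma rho tau pi : R :=
  value P r gamma rho pi + tau * disc_entropy P gamma rho pi.

Definition opt_reg_value P r gamma rho tau : R :=
  sup [set reg_value P r gamma rho tau pi | pi in is_policy].

Definition softmax (theta : S -> A -> R) : S -> A -> R :=
  fun s a => expR (theta s a) / \sum_(a' : A) expR (theta s a').

End MDP.

(* Main.v *)
Require Import Defs.
From mathcomp Require Import all_boot all_order all_algebra.
From mathcomp Require Import all_classical all_reals all_analysis.
From mathcomp Require Import ring lra.
Import Order.TTheory GRing.Theory Num.Theory.
Local Open Scope ring_scope.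

Lemma geo_lim (R : realType) (gamma c : R) (w : nat -> R) :
  0 <= gamma < 1 -> (forall t, 0 <= w t <= c) ->
  0 <= limn (fun n => \sum_(0 <= t < n) (gamma ^+ t * w t)) <= c / (1 - gamma).
Proof.
move=> /andP[g0 g1] hw.
set u := fun n => _.
have hinc : forall n, u n <= u n.+1.
  move=> n; rewrite /u big_nat_recr //= lerDl.
  by have /andP[? ?] := hw n; apply: mulr_ge0 => //; apply: exprn_ge0.
have mono : {homo u : n m / (n <= m)%N >-> n <= m}.
  by apply/nondecreasing_seqP.
have hb : forall n, (1 - gamma) * u n <= c * (1 - gamma ^+ n).
  elim=> [|n IH]; first by rewrite /u big_nil expr0 subrr !mulr0.
  rewrite /u big_nat_recr //= -/(u n) exprS.
  have /andP[w0 wc] := hw n.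
  have gn : 0 <= gamma ^+ n by apply: exprn_ge0.
  have : gamma ^+ n * w n <= gamma ^+ n * c by apply: ler_wpM2l.
  nra.
have ub : forall n, u n <= c / (1 - gamma).
  move=> n; rewrite ler_pdivlMr ?subr_gt0 // mulrC.
  apply: (le_trans (hb n)).
  have gn : 0 <= gamma ^+ n by apply: exprn_ge0.
  have c0 : 0 <= c by have /andP[a b] := hw 0%N; apply: le_trans b.
  nra.
have cv : cvgn u.
  apply: nondecreasing_is_cvgn => //.
  by exists (c / (1 - gamma)) => _ [n _ <-]; apply: ub.
apply/andP; split.
  apply: limr_ge => //; near=> n.
  by have := mono 0%N n (leq0n n); rewrite /u big_nil.
by apply: limr_le => //; near=> n; apply: ub.
Unshelve. all: by end_near.
Qed.
Lemma sd_dist (R : realType) (S A : finType) (P : S -> A -> S -> R) pi rho :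
  is_transition P -> is_policy pi -> is_distribution rho ->
  forall t, is_distribution (state_dist P pi rho t).
Proof.
move=> [P0 P1] [p0 p1] hr; elim=> [|t [d0 d1]] //=; split.
  by move=> s'; apply: sumr_ge0 => s _; apply: sumr_ge0 => a _;
     rewrite mulr_ge0 ?mulr_ge0.
rewrite exchange_big /=.
transitivity (\sum_(s : S) state_dist P pi rho t s).
  apply: eq_bigr => s _; rewrite exchange_big /=.
  transitivity (\sum_(a : A) state_dist P pi rho t s * pi s a).
    by apply: eq_bigr => a _; rewrite -mulr_sumr P1 mulr1.
  by rewrite -mulr_sumr p1 mulr1.
exact: d1.
Qed.

Lemma step_bound (R : realType) (S A : finType) (d : S -> R) (pi f : S -> A -> R) c :
  is_distribution d -> (forall s, 0 <= \sum_(a : A) pi s a * f s a <= c) ->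
  0 <= \sum_(s : S) \sum_(a : A) d s * pi s a * f s a <= c.
Proof.
move=> [d0 d1] hf.
have E : \sum_(s : S) \sum_(a : A) d s * pi s a * f s a
   = \sum_(s : S) d s * \sum_(a : A) pi s a * f s a.
  by apply: eq_bigr => s _; rewrite mulr_sumr; apply: eq_bigr => a _; rewrite mulrA.
rewrite E; apply/andP; split.
  by apply: sumr_ge0 => s _; have /andP[? ?] := hf s; apply: mulr_ge0.
apply: (le_trans (y := \sum_(s : S) d s * c)).
  by apply: ler_sum => s _; have /andP[? ?] := hf s; apply: ler_wpM2l.
by rewrite -mulr_suml d1 mul1r.
Qed.

Lemma pol_le1 (R : realType) (S A : finType) (pi : S -> A -> R) s a :
  is_policy pi -> pi s a <= 1.
Proof.
move=> [p0 p1]; rewrite -(p1 s) (bigD1 a) //= lerDl.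
by apply: sumr_ge0 => b _; apply: p0.
Qed.

Lemma ent_term (R : realType) (p N : R) : 0 <= p -> 0 < N ->
  p * - ln p <= p * ln N + N^-1 - p.
Proof.
move=> p0 N0; have [->|pp] := eqVneq p 0.
  by rewrite !mul0r subr0 add0r invr_ge0 ltW.
have pg : 0 < p by rewrite lt_def pp p0.
have pN : 0 < p * N by apply: mulr_gt0.
have h : ln (1 + ((p * N)^-1 - 1)) <= (p * N)^-1 - 1.
  apply: le_ln1Dx; rewrite ltrBrDl subrr invr_gt0 //.
rewrite addrC subrK lnV ?posrE // lnM ?posrE // in h.
have : p * (- (ln p + ln N)) <= p * ((p * N)^-1 - 1) by apply: ler_wpM2l.
have -> : p * ((p * N)^-1 - 1) = N^-1 - p.
  by field; apply/andP; split; rewrite gt_eqF.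
lra.
Qed.

Lemma ent_state (R : realType) (S A : finType) (pi : S -> A -> R) s :
  (0 < #|A|)%N -> is_policy pi ->
  0 <= \sum_(a : A) pi s a * - ln (pi s a) <= ln (#|A|%:R).
Proof.
move=> hA hp; have [p0 p1] := hp.
have N0 : 0 < (#|A|%:R : R) by rewrite ltr0n.
apply/andP; split.
  apply: sumr_ge0 => a _; apply: mulr_ge0 => //.
  by rewrite oppr_ge0; apply: ln_le0; apply: pol_le1.
apply: (le_trans (y := \sum_(a : A) (pi s a * ln (#|A|%:R) + (#|A|%:R)^-1 - pi s a))).
  by apply: ler_sum => a _; apply: ent_term.
rewrite big_split /= big_split /= sumr_const -mulr_suml p1 mul1r.
have E1 : ((#|A|%:R : R)^-1 *+ #|A|) = 1.
  by rewrite -(mulr_natr ((#|A|%:R : R)^-1) #|A|) mulVf ?gt_eqF.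
rewrite sumrN p1; rewrite E1; lra.
Qed.

Lemma val_state (R : realType) (S A : finType) (pi : S -> A -> R) r s :
  is_policy pi -> (forall s a, 0 <= r s a <= 1) ->
  0 <= \sum_(a : A) pi s a * r s a <= 1.
Proof.
move=> [p0 p1] hr; apply/andP; split.
  by apply: sumr_ge0 => a _; have /andP[? ?] := hr s a; apply: mulr_ge0.
rewrite -(p1 s); apply: ler_sum => a _; have /andP[? ?] := hr s a.
by rewrite -[leRHS]mulr1; apply: ler_wpM2l.
Qed.

Theorem lemma20 (R : realType) (S A : finType)
  (P : S -> A -> S -> R) (r : S -> A -> R) (gamma : R) (rho : S -> R)
  (theta : S -> A -> R) (tau1 tau2 : R) :
  (0 < #|A|)%N ->
  is_transition P ->
  (forall s a, 0 <= r s a <= 1) ->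
  0 <= gamma < 1 ->
  is_distribution rho ->
  0 < tau2 -> tau2 < tau1 ->
  opt_reg_value P r gamma rho tau2 - reg_value P r gamma rho tau2 (softmax theta)
  <= opt_reg_value P r gamma rho tau1 - reg_value P r gamma rho tau1 (softmax theta)
     + 2 * tau1 * ln (#|A|%:R) / (1 - gamma).
Proof.
move=> hA hP hr hg hrho t2 t12.
have [a0 _] := card_gt0P hA.
have pol_th : is_policy (softmax theta).
  have D0 : forall s, 0 < \sum_(a' : A) expR (theta s a').
    move=> s; rewrite (bigD1 a0) //=; apply: ltr_pwDl; first exact: expR_gt0.
    by apply: sumr_ge0 => b _; apply: ltW; apply: expR_gt0.
  split.
    by move=> s a; rewrite /softmax; apply: divr_ge0; [apply: ltW; apply: expR_gt0|apply: ltW].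
  by move=> s; rewrite /softmax -mulr_suml mulfV ?gt_eqF.
have HH : forall pi, is_policy pi ->
    0 <= disc_entropy P gamma rho pi <= ln (#|A|%:R) / (1 - gamma).
  move=> pi hpi; rewrite /disc_entropy /disc_sum; apply: geo_lim => // t.
  apply: step_bound; first exact: sd_dist.
  by move=> s; apply: ent_state.
have HV : forall pi, is_policy pi ->
    0 <= value P r gamma rho pi <= 1 / (1 - gamma).
  move=> pi hpi; rewrite /value /disc_sum; apply: geo_lim => // t.
  apply: step_bound; first exact: sd_dist.
  by move=> s; apply: val_state.
have g1 : 0 < 1 - gamma by case/andP: hg => _ h; rewrite subr_gt0.
have L0 : 0 <= ln (#|A|%:R : R) by apply: ln_ge0; rewrite ler1n.
set K := ln (#|A|%:R : R) / (1 - gamma).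
have K0 : 0 <= K by apply: divr_ge0 => //; apply: ltW.
set E1 := [set reg_value P r gamma rho tau1 pi | pi in @is_policy R S A]%classic.
have ubE1 : has_ubound E1.
  exists (1 / (1 - gamma) + tau1 * K) => _ [pi hpi <-].
  rewrite /reg_value; apply: lerD; first by case/andP: (HV pi hpi).
  apply: ler_wpM2l; first by apply: ltW; apply: lt_trans t12.
  by case/andP: (HH pi hpi).
have S21 : opt_reg_value P r gamma rho tau2 <= opt_reg_value P r gamma rho tau1.
  apply: ge_sup.
    by exists (reg_value P r gamma rho tau2 (softmax theta)); exists (softmax theta).
  move=> _ [pi hpi <-].
  apply: (le_trans (y := reg_value P r gamma rho tau1 pi)); last first.
    by apply: (ub_le_sup ubE1); exists pi.
  rewrite /reg_value lerD2l; apply: ler_wpM2r; last exact: ltW.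
  by case/andP: (HH pi hpi).
rewrite /reg_value -!mulrA -/K.
have /andP[H0 HK] := HH _ pol_th.
set H := disc_entropy _ _ _ _ in H0 HK *.
have : (tau1 - tau2) * H <= (tau1 - tau2) * K.
  by apply: ler_wpM2l => //; rewrite subr_ge0 ltW.
nra.
Qed.
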